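(* Let $M=((W,\preccurlyeq,S),V)$ be an $\mathrm{ITL}^{\mathrm{BD}_n}$ model and $w\in W$ with $M,w\models\{\Box(\neg p\vee\neg\neg p)\mid p\in\mathbb{P}\}$. Then there exist an $\mathrm{ITL}^{\mathrm{BD}_n}$ model $M'=((W',\preccurlyeq',S'),V')$, a world $w'\in W'$ and an intuitionistic temporal bisimulation $Z\subseteq W\times W'$ such that for all $i\ge0$, $S^i(w)\,Z\,S'^i(w')$ and the subframe generated by $S'^i(w')$ has a unique $\preccurlyeq'$-maximal world $u_i$.
   Context: Fix a countable set $\mathbb{P}$ of atoms. Temporal formulas: $\varphi ::= p\mid\bot\mid\varphi\wedge\varphi\mid\varphi\vee\varphi\mid\varphi\to\varphi\mid\circ\varphi\mid\varphi\,\mathsf{U}\,\varphi\mid\varphi\,\mathsf{R}\,\varphi$; $\neg\varphi:=\varphi\to\bot$, $\Box\varphi:=\bot\,\mathsf{R}\,\varphi$. An intuitionistic temporal frame is $(W,\preccurlyeq,S)$ with $W\ne\emptyset$, $\preccurlyeq$ a partial order, $S:W\to W$ forward confluent ($w\preccurlyeq v\Rightarrow S(w)\preccurlyeq S(v)$); persistent if also backward confluent (if $S(w)=v\preccurlyeq u$ then some $t\succcurlyeq w$ has $S(t)=u$). A model adds $V:W\to2^{\mathbb{P}}$ monotone along $\preccurlyeq$. Satisfaction: atoms via $V$; $\bot$ never; $\wedge,\vee$ pointwise; $M,w\models\varphi\to\psi$ iff for all $v\succcurlyeq w$, $M,v\models\varphi$ implies $M,v\models\psi$; $\circ\varphi$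 at $w$ iff $\varphi$ at $S(w)$; $\varphi\,\mathsf{U}\,\psi$: some $k\ge0$ with $\psi$ at $S^k(w)$ and $\varphi$ at $S^i(w)$ for all $0\le i<k$; $\varphi\,\mathsf{R}\,\psi$: for all $k\ge0$, $\psi$ at $S^k(w)$ or $\varphi$ at some $S^i(w)$, $0\le i<k$. An $\mathrm{ITL}^{\mathrm{BD}_n}$ model is a model on a persistent frame with no chain of $n+1$ pairwise distinct $\preccurlyeq$-related worlds. A world is maximal if no distinct world lies $\preccurlyeq$-above it; the subframe generated by $x$ is $\{y\mid x\preccurlyeq y\}$. An intuitionistic temporal bisimulation between $M_1=((W_1,\preccurlyeq_1,S_1),V_1)$ and $M_2=((W_2,\preccurlyeq_2,S_2),V_2)$ is $Z\subseteq W_1\times W_2$ such that whenever $w_1Zw_2$: (C1) $V_1(w_1)=V_2(w_2)$; (C2) for every $v_1\succcurlyeq w_1$ there is $v_2\succcurlyeq w_2$ with $v_1Zv_2$; (C3) for every $v_2\succcurlyeq w_2$ there is $v_1\succcurlyeq w_1$ with $v_1Zv_2$; (C5) $S_1(w_1)\,Z\,S_2(w_2)$; (C6) for all $k_1\ge0$ there are $k_2\ge0$ and $v_1Zv_2$ with $v_2\preccurlyeq S_2^{k_2}(w_2)$, $S_1^{k_1}(w_1)\preccurlyeq v_1$, and for all $0\le j_2<k_2$ there are $0\le j_1<k_1$ and $u_1Zu_2$ with $S_1^{j_1}(w_1)\preccurlyeq u_1$, $u_2\preccurlyeq S_2^{j_2}(w_2)$; (C7) for all $k_2\ge0$ there are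 $k_1\ge0$ and $v_1Zv_2$ with $v_1\preccurlyeq S_1^{k_1}(w_1)$, $S_2^{k_2}(w_2)\preccurlyeq v_2$, and for all $0\le j_1<k_1$ there are $0\le j_2<k_2$ and $u_1Zu_2$ with $S_2^{j_2}(w_2)\preccurlyeq u_2$, $u_1\preccurlyeq S_1^{j_1}(w_1)$; (C8) for all $k_2\ge0$ there are $k_1\ge0$ and $v_1Zv_2$ with $v_2\preccurlyeq S_2^{k_2}(w_2)$, $S_1^{k_1}(w_1)\preccurlyeq v_1$, and for all $0\le j_1<k_1$ there are $0\le j_2<k_2$ and $u_1Zu_2$ with $S_1^{j_1}(w_1)\preccurlyeq u_1$, $u_2\preccurlyeq S_2^{j_2}(w_2)$; (C9) for all $k_1\ge0$ there are $k_2\ge0$ and $v_1Zv_2$ with $v_1\preccurlyeq S_1^{k_1}(w_1)$, $S_2^{k_2}(w_2)\preccurlyeq v_2$, and for all $0\le j_2<k_2$ there are $0\le j_1<k_1$ and $u_1Zu_2$ with $S_2^{j_2}(w_2)\preccurlyeq u_2$, $u_1\preccurlyeq S_1^{j_1}(w_1)$. *)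

(* Defs.v *)
From mathcomp Require Import ssreflect ssrfun ssrbool eqtype ssrnat choice.


Inductive form (P : Type) : Type :=
| Atom : P -> form P
| Bot : form P
| And : form P -> form P -> form P
| Or : form P -> form P -> form P
| Imp : form P -> form P -> form P
| Next : form P -> form P
| Until : form P -> form P -> form P
| Release : form P -> form P -> form P.
Arguments Atom {P} _.
Arguments Bot {P}.
Arguments And {P} _ _.
Arguments Or {P} _ _.
Arguments Imp {P} _ _.
Arguments Next {P} _.
Arguments Until {P} _ _.
Arguments Release {P} _ _.

Definition Neg {P : Type} (phi : form P) : form P := Imp phi Bot.
Definition Box {P : Type} (phi : form P) : form P := Release Bot phi.

Record model (P : Type) : Type := Model {
  world : Type;
  le : world -> world -> Prop;
  succ : world -> world;
  val : world -> P -> Prop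
}.
Arguments world {P} m.
Arguments le {P} m _ _.
Arguments succ {P} m _.
Arguments val {P} m _ _.

Definition Sk {P : Type} (M : model P) (k : nat) (w : world M) : world M :=
  iter k (succ M) w.

Definition is_partial_order {P : Type} (M : model P) : Prop :=
  (forall w, le M w w) /\
  (forall u v w, le M u v -> le M v w -> le M u w) /\
  (forall u v, le M u v -> le M v u -> u = v).

Definition forward_confluent {P : Type} (M : model P) : Prop :=
  forall w v, le M w v -> le M (succ M w) (succ M v).

Definition backward_confluent {P : Type} (M : model P) : Prop :=
  forall w u, le M (succ M w) u -> exists t, le M w t /\ succ M t = u.

Definition monotone_val {P : Type} (M : model P) : Prop :=
  forall w v p, le M w v -> val M w p -> val M v p.

Definition bounded_depth {P : Type} (M : model P) (n : nat) : Prop :=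
  ~ exists f : nat -> world M,
      (forall i, i < n -> le M (f i) (f i.+1)) /\
      (forall i j, i <= n -> j <= n -> i <> j -> f i <> f j).

Definition ITL_BD_model {P : Type} (n : nat) (M : model P) : Prop :=
  inhabited (world M) /\ is_partial_order M /\ forward_confluent M /\
  backward_confluent M /\ monotone_val M /\ bounded_depth M n.

Fixpoint sat {P : Type} (M : model P) (w : world M) (phi : form P) : Prop :=
  match phi with
  | Atom p => val M w p
  | Bot => False
  | And a b => sat M w a /\ sat M w b
  | Or a b => sat M w a \/ sat M w b
  | Imp a b => forall v, le M w v -> sat M v a -> sat M v b
  | Next a => sat M (succ M w) a
  | Until a b => exists k, sat M (Sk M k w) b /\
                   (forall i, i < k -> sat M (Sk M i w) a)
  | Release a b => forall k, sat M (Sk M k w) b \/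
                   (exists i, i < k /\ sat M (Sk M i w) a)
  end.

(* Intuitionistic temporal bisimulation (conditions C1-C3, C5-C9). *)
Definition bisimulation {P : Type} (M1 M2 : model P)
    (Z : world M1 -> world M2 -> Prop) : Prop :=
  forall w1 w2, Z w1 w2 ->
  (forall p, val M1 w1 p <-> val M2 w2 p) /\
  (forall v1, le M1 w1 v1 -> exists v2, le M2 w2 v2 /\ Z v1 v2) /\
  (forall v2, le M2 w2 v2 -> exists v1, le M1 w1 v1 /\ Z v1 v2) /\
  Z (succ M1 w1) (succ M2 w2) /\
  (forall k1, exists k2 v1 v2, Z v1 v2 /\
              le M2 v2 (Sk M2 k2 w2) /\ le M1 (Sk M1 k1 w1) v1 /\
              (forall j2, j2 < k2 -> exists j1 u1 u2, j1 < k1 /\ Z u1 u2 /\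
                 le M1 (Sk M1 j1 w1) u1 /\ le M2 u2 (Sk M2 j2 w2))) /\
  (forall k2, exists k1 v1 v2, Z v1 v2 /\
              le M1 v1 (Sk M1 k1 w1) /\ le M2 (Sk M2 k2 w2) v2 /\
              (forall j1, j1 < k1 -> exists j2 u1 u2, j2 < k2 /\ Z u1 u2 /\
                 le M2 (Sk M2 j2 w2) u2 /\ le M1 u1 (Sk M1 j1 w1))) /\
  (forall k2, exists k1 v1 v2, Z v1 v2 /\
              le M2 v2 (Sk M2 k2 w2) /\ le M1 (Sk M1 k1 w1) v1 /\
              (forall j1, j1 < k1 -> exists j2 u1 u2, j2 < k2 /\ Z u1 u2 /\
                 le M1 (Sk M1 j1 w1) u1 /\ le M2 u2 (Sk M2 j2 w2))) /\
  (forall k1, exists k2 v1 v2, Z v1 v2 /\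
              le M1 v1 (Sk M1 k1 w1) /\ le M2 (Sk M2 k2 w2) v2 /\
              (forall j2, j2 < k2 -> exists j1 u1 u2, j1 < k1 /\ Z u1 u2 /\
                 le M2 (Sk M2 j2 w2) u2 /\ le M1 u1 (Sk M1 j1 w1))).

Definition maximal {P : Type} (M : model P) (u : world M) : Prop :=
  forall v, le M u v -> v = u.

Definition unique_maximal_above {P : Type} (M : model P) (x : world M) : Prop :=
  exists u, (le M x u /\ maximal M u) /\
            (forall u', le M x u' /\ maximal M u' -> u' = u).

(* Main.v *)
Require Import Defs.
From mathcomp Require Import ssreflect ssrfun ssrbool eqtype ssrnat choice.
From mathcomp Require Import zify.
From Stdlib Require Import Classical ClassicalEpsilon FunctionalExtensionality PropExtensionality ProofIrrelevance.


Definition Rel {P : Type} (M : model P) (u v : world M) : Prop :=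
  u = v \/ (maximal M u /\ maximal M v /\
            forall k p, Defs.val M (Sk M k u) p <-> Defs.val M (Sk M k v) p).

Lemma Rel_sym {P : Type} {M : model P} {u v} : Rel M u v -> Rel M v u.
Proof.
  case=> [->|[h1 [h2 h3]]]; [by left|right; do 2 split=> //].
  move=> k p; exact: iff_sym (h3 k p).
Qed.

Lemma Rel_trans {P : Type} {M : model P} {u v x} : Rel M u v -> Rel M v x -> Rel M u x.
Proof.
  case=> [->|[h1 [h2 h3]]] //.
  case=> [<-|[g1 [g2 g3]]]; [by right|right; do 2 split=> //].
  move=> k p; exact: (iff_trans (h3 k p) (g3 k p)).
Qed.

Definition rep {P : Type} (M : model P) (inh : inhabited (world M)) (v : world M) :=
  epsilon inh (fun u => Rel M u v).

Lemma rep_Rel {P : Type} {M : model P} inh v : Rel M (rep M inh v) v.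
Proof. apply: (epsilon_spec inh (fun u => Rel M u v)); exists v; by left. Qed.

Lemma rep_eq {P : Type} {M : model P} inh u v : Rel M u v -> rep M inh u = rep M inh v.
Proof.
  move=> H; rewrite /rep; f_equal; apply: functional_extensionality => y.
  apply: propositional_extensionality; split=> G.
  - exact: Rel_trans G H.
  - exact: Rel_trans G (Rel_sym H).
Qed.

Lemma rep_idem {P : Type} {M : model P} inh v : rep M inh (rep M inh v) = rep M inh v.
Proof. apply: rep_eq; exact: rep_Rel. Qed.

Lemma Rel_max {P : Type} {M : model P} {u v} : Rel M u v -> maximal M u -> maximal M v.
Proof. by case=> [->|[_ [h _]]]. Qed.

Lemma Rel_val {P : Type} {M : model P} {u v p} : Rel M u v -> Defs.val M u p -> Defs.val M v p.
Proof. case=> [->|[_ [_ h]]] // H; exact: (proj1 (h 0 p)). Qed.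

Lemma rep_nonmax {P : Type} {M : model P} inh v : ~ maximal M v -> rep M inh v = v.
Proof. move=> H; case: (rep_Rel inh v) => [//|[_ [h _]]]; by []. Qed.

Lemma max_succ {P : Type} {M : model P} u :
  backward_confluent M -> maximal M u -> maximal M (succ M u).
Proof.
  move=> BC H v /BC [t [h1 <-]]; by rewrite (H t h1).
Qed.

Lemma Rel_succ {P : Type} {M : model P} {u v} :
  backward_confluent M -> Rel M u v -> Rel M (succ M u) (succ M v).
Proof.
  move=> BC [->|[h1 [h2 h3]]]; [by left|right].
  split; [exact: max_succ|split; [exact: max_succ|]].
  move=> k p; have := h3 k.+1 p; by rewrite /Sk !iterSr.
Qed.

Definition W' {P : Type} (M : model P) inh := {v : world M | rep M inh v = v}.

Definition le' {P : Type} (M : model P) inh (a b : W' M inh) : Prop :=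
  exists y, rep M inh y = proj1_sig b /\ Defs.le M (proj1_sig a) y.

Definition succ' {P : Type} (M : model P) inh (a : W' M inh) : W' M inh :=
  exist _ (rep M inh (succ M (proj1_sig a))) (rep_idem inh _).

Definition Mq {P : Type} (M : model P) inh : model P :=
  Model P (W' M inh) (le' M inh) (succ' M inh) (fun a p => Defs.val M (proj1_sig a) p).

Lemma sig_eq {A : Type} {Q : A -> Prop} (a b : {x | Q x}) :
  proj1_sig a = proj1_sig b -> a = b.
Proof.
  case: a => x hx; case: b => y hy /= E; subst y; f_equal; apply: proof_irrelevance.
Qed.

Lemma maxle {P : Type} {M : model P} {inh} {a b : W' M inh} :
  le' M inh a b -> maximal M (proj1_sig a) -> b = a.
Proof.
  case=> y [Ey Hy] Hm; apply: sig_eq; rewrite -Ey (Hm y Hy); exact: (proj2_sig a).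
Qed.

Lemma nonmax_le {P : Type} {M : model P} {inh} {a b : W' M inh} :
  le' M inh a b -> ~ maximal M (proj1_sig b) -> Defs.le M (proj1_sig a) (proj1_sig b).
Proof.
  case=> y [Ey Hy] Hm.
  case: (classic (maximal M y)) => Hy'.
  - exfalso; apply: Hm; rewrite -Ey; apply: Rel_max (Rel_sym (rep_Rel inh y)) Hy'.
  - by rewrite -Ey (rep_nonmax inh y Hy').
Qed.

Lemma max_iff {P : Type} {M : model P} inh (a : W' M inh) :
  maximal (Mq M inh) a <-> maximal M (proj1_sig a).
Proof.
  split.
  - move=> H v Hv.
    have L : le' M inh a (exist _ (rep M inh v) (rep_idem inh v)) by exists v; split.
    have E := f_equal (@proj1_sig _ _) (H _ L); simpl in E.
    case: (classic (maximal M v)) => Hmv.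
    + have Hma : maximal M (proj1_sig a).
        rewrite -E; exact: Rel_max (Rel_sym (rep_Rel inh v)) Hmv.
      exact: Hma v Hv.
    + by rewrite -(rep_nonmax inh v Hmv).
  - move=> H v Hv; exact: maxle Hv H.
Qed.

Lemma rel_rep {P : Type} {M : model P} inh y : Rel M y (rep M inh y).
Proof. exact: Rel_sym (rep_Rel inh y). Qed.

Lemma max_rep {P : Type} {M : model P} inh y : maximal M y -> maximal M (rep M inh y).
Proof. exact: Rel_max (rel_rep inh y). Qed.

Lemma le'_refl {P : Type} {M : model P} inh (a : W' M inh) :
  is_partial_order M -> le' M inh a a.
Proof. move=> [R _]; exists (proj1_sig a); split; [exact: proj2_sig a|exact: R]. Qed.

Lemma Mq_PO {P : Type} {M : model P} inh : is_partial_order M -> is_partial_order (Mq M inh).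
Proof.
  move=> PO; have [R [T A]] := PO; split; [|split].
  - move=> a; exact: (le'_refl _ _ PO).
  - move=> a b c [y1 [E1 H1]] [y2 [E2 H2]].
    case: (classic (maximal M y1)) => Hy1.
    + have Hb : maximal M (proj1_sig b) by rewrite -E1; exact: max_rep.
      have Ey2 := Hb _ H2; subst y2.
      exists y1; split=> //; rewrite -E2 (proj2_sig b) //.
    + rewrite (rep_nonmax inh y1 Hy1) in E1; subst y1.
      exists y2; split=> //; exact: T H1 H2.
  - move=> a b hab hba.
    case: (classic (maximal M (proj1_sig a))) => Ha.
    + by rewrite (maxle hab Ha).
    case: (classic (maximal M (proj1_sig b))) => Hb.
    + by rewrite (maxle hba Hb).
    apply: sig_eq; apply: A; exact: nonmax_le.
Qed.

Lemma Mq_FC {P : Type} {M : model P} inh :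
  is_partial_order M -> forward_confluent M -> backward_confluent M ->
  forward_confluent (Mq M inh).
Proof.
  move=> [R [T A]] FC BC a b [y [E H]] /=.
  have Ry : Rel M y (proj1_sig b) by rewrite -E; exact: rel_rep.
  have H' := FC _ _ H.
  have Rs := Rel_succ BC Ry.
  case: (classic (maximal M (succ M (proj1_sig a)))) => Hs.
  - have E' := Hs _ H'.
    exists (rep M inh (succ M (proj1_sig a))); split; last exact: R.
    rewrite /= rep_idem -E'; exact: rep_eq.
  - exists (succ M y); split; first exact: rep_eq.
    by rewrite /= (rep_nonmax inh _ Hs).
Qed.

Lemma Mq_BC {P : Type} {M : model P} inh :
  is_partial_order M -> backward_confluent M ->
  backward_confluent (Mq M inh).
Proof.
  move=> PO BC a u [y [E H]] /=.
  case: (classic (maximal M (succ M (proj1_sig a)))) => Hs.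
  - have E' := max_rep inh _ Hs _ H; subst y.
    exists a; split; first exact: (le'_refl _ _ PO).
    apply: sig_eq; rewrite -E /= rep_idem //.
  - rewrite /= (rep_nonmax inh _ Hs) in H.
    have [t0 [Ht0 Et0]] := BC _ _ H.
    exists (exist (fun v => rep M inh v = v) (rep M inh t0) (rep_idem inh t0)); split.
    + by exists t0; split.
    + apply: sig_eq; rewrite /= -E -Et0; apply: rep_eq; apply: Rel_succ BC _.
      exact: rep_Rel.
Qed.

Lemma Mq_MV {P : Type} {M : model P} inh :
  monotone_val M -> monotone_val (Mq M inh).
Proof.
  move=> MV a b p [y [E H]] /= hv.
  rewrite -E; apply: Rel_val (rel_rep inh y) _; exact: MV H hv.
Qed.

Lemma Mq_BD {P : Type} {M : model P} inh n :
  is_partial_order M -> bounded_depth M n -> bounded_depth (Mq M inh) n.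
Proof.
  move=> PO BD [f [Hc Hd]]; apply: BD.
  case: n Hc Hd => [|m] Hc Hd.
  - exists (fun i => proj1_sig (f i)); split; first by [].
    move=> i j hi hj hij; exfalso; apply: hij; lia.
  - have [y [Ey Hy]] := Hc m (ltnSn m).
    have NM : forall i, i < m.+1 -> ~ maximal M (proj1_sig (f i)).
      move=> i hi Hm; have E := maxle (Hc i hi) Hm.
      apply: (Hd i.+1 i) => //; lia.
    pose g i := if i == m.+1 then y else proj1_sig (f i).
    have key : forall i, rep M inh (g i) = proj1_sig (f i).
      move=> i; rewrite /g; case: eqP => [->|_] //; exact: proj2_sig (f i).
    exists g; split.
    + move=> i hi; have hi' : (i == m.+1) = false by lia.
      rewrite /g hi'.
      case: (eqVneq i m) => [->|him]; first by rewrite eqxx.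
      have hi2 : (i.+1 == m.+1) = false by lia.
      rewrite hi2; apply: nonmax_le (Hc i hi) (NM i.+1 _); lia.
    + move=> i j hi hj hij E; apply: (Hd i j hi hj hij); apply: sig_eq.
      by rewrite -!key E.
Qed.

Lemma chain_or_max {P : Type} {M : model P} :
  is_partial_order M -> forall k a,
  (exists m, Defs.le M a m /\ maximal M m) \/
  exists f : nat -> world M, f 0 = a /\ (forall i, i < k -> Defs.le M (f i) (f i.+1)) /\
     (forall i j, i <= k -> j <= k -> i <> j -> f i <> f j).
Proof.
  move=> [R [T A]]; elim=> [|k IH] a.
  - right; exists (fun _ => a); split=> //; split=> // i j hi hj hij; exfalso; apply: hij; lia.
  - case: (classic (exists m, Defs.le M a m /\ maximal M m)) => [H|H]; first by left.
    have [v [Hv Hne]] : exists v, Defs.le M a v /\ v <> a.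
      apply: NNPP => C; apply: H; exists a; split; first exact: R.
      move=> v Hv; apply: NNPP => Hne; apply: C; by exists v.
    case: (IH v) => [[m [Hm1 Hm2]]|[g [g0 [gc gd]]]].
    + left; exists m; split=> //; exact: T Hv Hm1.
    + have gup : forall i, i <= k -> Defs.le M v (g i).
        elim=> [|i IHi] hi; first by rewrite g0; exact: R.
        apply: T (IHi _) (gc i _); lia.
      right; exists (fun i => if i is i'.+1 then g i' else a); split=> //; split.
      * case=> [|i] hi /=; first by rewrite g0.
        apply: gc; lia.
      * case=> [|i] [|j] hi hj hij //=.
        -- move=> E; apply: Hne; apply: A => //; rewrite E; apply: gup; lia.
        -- move=> E; apply: Hne; apply: A => //; rewrite -E; apply: gup; lia.
        -- apply: gd; lia.
Qed.

Lemma max_exists {P : Type} {M : model P} n a :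
  is_partial_order M -> bounded_depth M n -> exists m, Defs.le M a m /\ maximal M m.
Proof.
  move=> PO BD; case: (chain_or_max PO n a) => // [[f [_ [H1 H2]]]].
  exfalso; apply: BD; by exists f.
Qed.

Definition mk {P : Type} (M : model P) inh (v : world M) : W' M inh :=
  exist (fun v => rep M inh v = v) (rep M inh v) (rep_idem inh v).

Definition Zq {P : Type} (M : model P) inh (v1 : world M) (v2 : world (Mq M inh)) : Prop :=
  rep M inh v1 = proj1_sig v2.

Lemma Z_succ {P : Type} {M : model P} inh a b :
  backward_confluent M -> Zq M inh a b -> Zq M inh (succ M a) (succ (Mq M inh) b).
Proof.
  move=> BC H; rewrite /Zq /= -H; apply: rep_eq; apply: Rel_succ BC _; exact: rel_rep.
Qed.

Lemma Z_Sk {P : Type} {M : model P} inh a b :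
  backward_confluent M -> Zq M inh a b -> forall k, Zq M inh (Sk M k a) (Sk (Mq M inh) k b).
Proof.
  move=> BC H; elim=> [|k IH] //=; exact: Z_succ BC IH.
Qed.

Lemma le_Sk {P : Type} {M : model P} a b :
  forward_confluent M -> Defs.le M a b -> forall k, Defs.le M (Sk M k a) (Sk M k b).
Proof. move=> FC H; elim=> [|k IH] //=; exact: FC. Qed.

Lemma max_Sk {P : Type} {M : model P} a :
  backward_confluent M -> maximal M a -> forall k, maximal M (Sk M k a).
Proof. move=> BC H; elim=> [|k IH] //=; exact: max_succ. Qed.

Lemma Mq_bisim {P : Type} {M : model P} inh :
  is_partial_order M -> backward_confluent M -> bisimulation M (Mq M inh) (Zq M inh).
Proof.
  move=> PO BC; have [R [T A]] := PO.
  have gen : forall w1 w2, Zq M inh w1 w2 -> forall k1,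
     exists k2 v1 v2, Zq M inh v1 v2 /\ Defs.le (Mq M inh) v2 (Sk (Mq M inh) k2 w2) /\
       Defs.le M (Sk M k1 w1) v1 /\
       (forall j2, j2 < k2 -> exists j1 u1 u2, j1 < k1 /\ Zq M inh u1 u2 /\
          Defs.le M (Sk M j1 w1) u1 /\ Defs.le (Mq M inh) u2 (Sk (Mq M inh) j2 w2)).
    move=> w1 w2 Hz k1; exists k1, (Sk M k1 w1), (Sk (Mq M inh) k1 w2).
    split; first exact: Z_Sk.
    split; first exact: (le'_refl _ _ PO).
    split; first exact: R.
    move=> j2 hj; exists j2, (Sk M j2 w1), (Sk (Mq M inh) j2 w2).
    split=> //; split; first exact: Z_Sk.
    split; [exact: R|exact: (le'_refl _ _ PO)].
  move=> w1 w2 Hz; split; [|split; [|split; [|split; [|split; [|split; [|split]]]]]].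
  - move=> p; rewrite /= -Hz; split=> h.
    + exact: Rel_val (rel_rep inh w1) h.
    + exact: Rel_val (rep_Rel inh w1) h.
  - move=> v1 hv.
    case: (classic (maximal M w1)) => Hm.
    + have E := Hm v1 hv; subst v1; exists w2; split=> //; exact: (le'_refl _ _ PO).
    + exists (mk M inh v1); split=> //.
      exists v1; split=> //; rewrite -Hz (rep_nonmax inh _ Hm) //.
  - move=> v2 [y [E H]].
    case: (classic (maximal M w1)) => Hm.
    + have Hm2 : maximal M (proj1_sig w2) by rewrite -Hz; exact: max_rep.
      have Ey := Hm2 y H; subst y.
      exists w1; split; first exact: R.
      rewrite /Zq -E -Hz rep_idem //.
    + exists y; split=> //; rewrite -(rep_nonmax inh _ Hm) Hz //.
  - exact: Z_succ.
  - exact: gen.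
  - move=> k2; exists k2, (Sk M k2 w1), (Sk (Mq M inh) k2 w2).
    split; first exact: Z_Sk.
    split; first exact: R.
    split; first exact: (le'_refl _ _ PO).
    move=> j1 hj; exists j1, (Sk M j1 w1), (Sk (Mq M inh) j1 w2).
    split=> //; split; first exact: Z_Sk.
    split; [exact: (le'_refl _ _ PO)|exact: R].
  - move=> k2; exists k2, (Sk M k2 w1), (Sk (Mq M inh) k2 w2).
    split; first exact: Z_Sk.
    split; first exact: (le'_refl _ _ PO).
    split; first exact: R.
    move=> j1 hj; exists j1, (Sk M j1 w1), (Sk (Mq M inh) j1 w2).
    split=> //; split; first exact: Z_Sk.
    split; [exact: R|exact: (le'_refl _ _ PO)].
  - move=> k1; exists k1, (Sk M k1 w1), (Sk (Mq M inh) k1 w2).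
    split; first exact: Z_Sk.
    split; first exact: R.
    split; first exact: (le'_refl _ _ PO).
    move=> j1 hj; exists j1, (Sk M j1 w1), (Sk (Mq M inh) j1 w2).
    split=> //; split; first exact: Z_Sk.
    split; [exact: (le'_refl _ _ PO)|exact: R].
Qed.

Lemma agree {P : Type} (M : model P) (w : world M) i y m :
  forward_confluent M -> backward_confluent M ->
  (forall p : P, sat M w (Box (Or (Neg (Atom p)) (Neg (Neg (Atom p)))))) ->
  Defs.le M (Sk M i w) y -> Defs.le M (Sk M i w) m -> maximal M y -> maximal M m ->
  forall k p, Defs.val M (Sk M k y) p <-> Defs.val M (Sk M k m) p.
Proof.
  move=> FC BC Hw Hy Hm My Mm k p.
  have Ly : Defs.le M (Sk M (k + i) w) (Sk M k y) by rewrite /Sk iterD; exact: le_Sk.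
  have Lm : Defs.le M (Sk M (k + i) w) (Sk M k m) by rewrite /Sk iterD; exact: le_Sk.
  have My' := max_Sk _ BC My k; have Mm' := max_Sk _ BC Mm k.
  case: (Hw p (k + i)) => [[Hn|Hnn]|[j [_ []]]].
  - split=> h; exfalso; [exact: Hn _ Ly h|exact: Hn _ Lm h].
  - split=> _; apply: NNPP => C.
    + apply: (Hnn _ Lm) => u hu; rewrite (Mm' u hu) => h; exact: C h.
    + apply: (Hnn _ Ly) => u hu; rewrite (My' u hu) => h; exact: C h.
Qed.

Theorem lemma4p13 (P : countType) (n : nat) (M : model P) (w : world M) :
  ITL_BD_model n M ->
  (forall p : P, sat M w (Box (Or (Neg (Atom p)) (Neg (Neg (Atom p)))))) ->
  exists (M' : model P) (w' : world M') (Z : world M -> world M' -> Prop),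
    ITL_BD_model n M' /\ bisimulation M M' Z /\
    forall i : nat, Z (Sk M i w) (Sk M' i w') /\
                    unique_maximal_above M' (Sk M' i w').
Proof.
  move=> [inh [PO [FC [BC [MV BD]]]]] Hw.
  exists (Mq M inh), (mk M inh w), (Zq M inh).
  split.
    split; first by constructor; exact: mk M inh w.
    split; first exact: Mq_PO.
    split; first exact: Mq_FC.
    split; first exact: Mq_BC.
    split; first exact: Mq_MV.
    exact: Mq_BD.
  split; first exact: Mq_bisim.
  move=> i.
  have Zx : Zq M inh (Sk M i w) (Sk (Mq M inh) i (mk M inh w)) by apply: Z_Sk.
  split=> //.
  set x' := Sk (Mq M inh) i (mk M inh w).
  set x := Sk M i w.
  have [m [Hm1 Hm2]] := max_exists n (proj1_sig x') PO BD.
  exists (mk M inh m); split.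
  - split; first by exists m; split.
    apply/max_iff; exact: max_rep.
  - move=> u' [[y [E H]] Hu2]; apply: sig_eq.
    move/max_iff: Hu2 => Hu2.
    have My : maximal M y by apply: Rel_max (rep_Rel inh y) _; rewrite E.
    rewrite /= -E; apply: rep_eq.
    case: (classic (maximal M x)) => Mx.
    + have Mx' : maximal M (proj1_sig x') by rewrite -Zx; exact: max_rep.
      rewrite (Mx' _ H) (Mx' _ Hm1); by left.
    + rewrite -Zx (rep_nonmax inh _ Mx) in H Hm1.
      right; split=> //; split=> //.
      exact: agree FC BC Hw H Hm1 My Hm2.
Qed.
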